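(* Let $\mathcal L$ be a non-trivial geometric lattice. Every modular diagram $(\mathcal E,\iota,J)$ of $\mathcal L$ with $J$ non-empty and $\iota^{-1}((\bigvee J)\wedge F_\iota)=\hat0$ is zero in $\mathcal{MD}(\mathcal L)$. Consequently the grading-$\hat0$ part $\mathcal{MD}(\mathcal L,\hat0)$ is one-dimensional, concentrated in degree $0$, and spanned by the class of the empty diagram $(\mathcal L,\mathrm{id}_{\mathcal L},\emptyset)$.
   Context: Geometric lattices. A geometric lattice is a finite lattice $\mathcal L$ (bottom $\hat0$, top $\hat1$, join $\vee$, meet $\wedge$) which is ranked (all maximal chains from $\hat0$ to a given element $F$ have the same length $\mathrm{rk}(F)$), atomic (every element is a join of atoms, i.e. rank-one elements) and semimodular ($\mathrm{rk}(F_1\wedge F_2)+\mathrm{rk}(F_1\vee F_2)\le\mathrm{rk}(F_1)+\mathrm{rk}(F_2)$). Elements are called flats, $\mathrm{At}(\mathcal L)$ denotes the set of atoms, and $\mathcal L$ is non-trivial if it has at least two elements. For a finite family $J$ of atoms, $\bigvee J$ is its join ($\bigvee\emptyset=\hat0$). Every interval $[F_1,F_2]$ is a geometric lattice, and products of geometric lattices are geometric lattices. A flat $F$ is modular if $\mathrm{rk}(F\wedge F')+\mathrm{rk}(F\vee F')=\mathrm{rk}(F)+\mathrm{rk}(F')$ for every flat $F'$. An embedding $\varphi:\mathcal L_1\to\mathcal L_2$ of geometric lattices is an injective order-preserving map preserving joins and sending atoms to atoms. Modular diagrams. Let $\mathcal L$ be a non-trivial geometric lattice. A modular extension of $\mathcal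 L$ is a pair $(\mathcal E,\iota)$ where $\mathcal E$ is a geometric lattice and $\iota:\mathcal L\to\mathcal E$ is an embedding whose image is an interval $[\hat0,F_\iota]$ with $F_\iota$ a modular flat of $\mathcal E$. A modular diagram of $\mathcal L$ is a triple $\Gamma=(\mathcal E,\iota,J)$ with $(\mathcal E,\iota)$ a modular extension and $J=(H_1,\dots,H_n)$ a finite word in the alphabet $\mathrm{At}(\mathcal E)$; its degree is $\deg\Gamma=n-2\big(\mathrm{rk}\bigvee J-\mathrm{rk}((\bigvee J)\wedge F_\iota)\big)$. $\mathcal{MD}(\mathcal L)$ is the $\mathbb Z$-graded $\mathbb Q$-vector space spanned by all modular diagrams, quotiented by the relations: (R1) $(\mathcal E,\iota,J)\sim-(\mathcal E,\iota,J')$ if $J'$ is obtained from $J$ by transposing two letters; (R2) $(\mathcal E,\iota,J)\sim(\mathcal E',\iota',J')$ if there is an embedding $\varphi:\mathcal E\to\mathcal E'$ with $\mathrm{rk}(\mathcal E)=\mathrm{rk}(\mathcal E')$, $\iota'=\varphi\circ\iota$ and $J'=\varphi(J)$ letterwise; (R3) $(\mathcal E,\iota,J)\sim0$ if $F_\iota\vee\bigvee J<\hat1_{\mathcal E}$; (R4) $(\mathcal E,\iota,J)\sim0$ if $\mathcal E\cong\mathcal E_1\times\mathcal E_2$ with $\mathcal E_1,\mathcal E_2$ non-trivial and $F_\iota\in\mathcal E_1\times\{\hat0\}$; (R5) $(\mathcal E,\iota,J)\sim0$ if there is a modular flat $F\ge F_\iota$ of $\mathcal E$ such that exactly two letters of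 $J$ are not below $F$. The grading-$\hat0$ part $\mathcal{MD}(\mathcal L,\hat0)$ is the span of classes of modular diagrams $(\mathcal E,\iota,J)$ with $\iota^{-1}((\bigvee J)\wedge F_\iota)=\hat0$. *)

(* Defs.v *)
From HB Require Import structures.
From mathcomp Require Import all_boot all_order all_algebra.
From mathcomp Require Import boolp.
Set Implicit Arguments. Unset Strict Implicit. Unset Printing Implicit Defensive.
Import Order.TTheory GRing.Theory.

(* Geometric lattices: a finite lattice is a finTBLatticeType (finite, with  *)
(* bottom \bot = 0^ and top \top = 1^).                                       *)
Section Lat.
Context {d : Order.disp_t} (T : finTBLatticeType d).

Definition covers (x y : T) : bool :=
  (x < y)%O && [forall z : T, ~~ ((x < z)%O && (z < y)%O)].

Definition maxchain (F : T) (k : nat) : bool :=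
  [exists t : k.-tuple T, path covers \bot%O (val t) && (last \bot%O (val t) == F)].

Definition ranked : Prop :=
  forall (F : T) (k1 k2 : nat), maxchain F k1 -> maxchain F k2 -> k1 = k2.

(* rank of F: the length of a maximal chain from \bot to F (any maximal
   chain has length < #|T|; for a ranked lattice this is well defined) *)
Definition rk (F : T) : nat :=
  \big[maxn/0%N]_(k < #|T|) (if maxchain F k then (k : nat) else 0%N).

Definition atom (x : T) : bool := rk x == 1%N.

Definition atomic : Prop :=
  forall F : T, exists A : {set T},
    (forall a, a \in A -> atom a) /\ F = \big[Order.join/ \bot%O]_(a in A) a.

Definition semimodular : Prop :=
  forall F1 F2 : T, (rk (F1 `&` F2)%O + rk (F1 `|` F2)%O <= rk F1 + rk F2)%N.

Definition geometric : Prop := [/\ ranked, atomic & semimodular].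

Definition nontrivial : Prop := (1 < #|T|)%N.

Definition modular_flat (F : T) : Prop :=
  forall F' : T, (rk (F `&` F')%O + rk (F `|` F')%O = rk F + rk F')%N.

Definition joinJ (J : seq T) : T := \big[Order.join/ \bot%O]_(H <- J) H.

End Lat.

Definition embedding {d1 d2 : Order.disp_t} (T1 : finTBLatticeType d1)
    (T2 : finTBLatticeType d2) (f : T1 -> T2) : Prop :=
  [/\ injective f,
      (forall x y : T1, (x <= y)%O -> (f x <= f y)%O),
      f \bot%O = \bot%O,
      (forall x y : T1, f (x `|` y)%O = (f x `|` f y)%O)
    & (forall a : T1, atom a -> atom (f a))].

(* Modular extension (E, iota) of L: iota is an embedding whose image is the
   interval [\bot, F_iota] with F_iota modular; necessarily F_iota = iota \top. *)
Definition modext {dL dE : Order.disp_t} (L : finTBLatticeType dL)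
    (E : finTBLatticeType dE) (iota : L -> E) : Prop :=
  [/\ embedding iota,
      modular_flat (iota \top%O)
    & forall y : E, (y <= iota \top%O)%O <-> exists x : L, iota x = y].

Record diagram {dL : Order.disp_t} (L : finTBLatticeType dL) := Diagram {
  dg_disp : Order.disp_t;
  dg_E : finTBLatticeType dg_disp;
  dg_geom : geometric dg_E;
  dg_iota : L -> dg_E;
  dg_ext : modext dg_iota;
  dg_J : seq dg_E;
  dg_atoms : all (@atom _ dg_E) dg_J }.

Section Diagrams.
Context {dL : Order.disp_t} (L : finTBLatticeType dL).
Local Open Scope ring_scope.

Definition Fiota (G : diagram L) : dg_E G := dg_iota G \top%O.

Definition deg (G : diagram L) : int :=
  (size (dg_J G))%:Z
  - 2%:Z * ((rk (joinJ (dg_J G)))%:Z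
            - (rk (joinJ (dg_J G) `&` Fiota G)%O)%:Z).

Definition grade0 (G : diagram L) : Prop :=
  forall x : L, dg_iota G x = (joinJ (dg_J G) `&` Fiota G)%O -> x = \bot%O.

(* The formal Q-vector space spanned by modular diagrams: finitely supported
   functions diagram L -> rat; delta G is the basis vector of G. *)
Definition delta (G : diagram L) : diagram L -> rat :=
  fun D => if pselect (D = G) then 1 else 0.

Definition tswap {d : Order.disp_t} {T : finTBLatticeType d}
    (J : seq T) (p q : nat) : seq T :=
  set_nth \bot%O (set_nth \bot%O J p (nth \bot%O J q)) q (nth \bot%O J p).

Definition splits_off {d : Order.disp_t} (E : finTBLatticeType d) (F : E) : Prop :=
  exists (d1 d2 : Order.disp_t) (E1 : finTBLatticeType d1)
         (E2 : finTBLatticeType d2) (psi : E -> E1 * E2),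
    [/\ geometric E1 /\ geometric E2, nontrivial E1 /\ nontrivial E2,
        bijective psi,
        (forall x y : E, (x <= y)%O =
            ((psi x).1 <= (psi y).1)%O && ((psi x).2 <= (psi y).2)%O)
      & (psi F).2 = \bot%O].

(* Relation vectors (R1)-(R5); each must vanish in MD(L). *)
Inductive relvec : (diagram L -> rat) -> Prop :=
| rel1 (dE : Order.disp_t) (E : finTBLatticeType dE) (hE : geometric E)
       (i : L -> E) (hi : modext i) (J : seq E) (hJ : all (@atom _ E) J)
       (p q : nat) (hJ' : all (@atom _ E) (tswap J p q)) :
    (p < q < size J)%N ->
    relvec (fun D => delta (Diagram hE hi hJ) D + delta (Diagram hE hi hJ') D)
| rel2 (G G' : diagram L) (phi : dg_E G -> dg_E G') :
    embedding phi ->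
    rk (\top%O : dg_E G) = rk (\top%O : dg_E G') ->
    (forall x : L, dg_iota G' x = phi (dg_iota G x)) ->
    dg_J G' = map phi (dg_J G) ->
    relvec (fun D => delta G D - delta G' D)
| rel3 (G : diagram L) :
    (Fiota G `|` joinJ (dg_J G) < \top)%O -> relvec (delta G)
| rel4 (G : diagram L) :
    splits_off (Fiota G) -> relvec (delta G)
| rel5 (G : diagram L) (F : dg_E G) :
    modular_flat F -> (Fiota G <= F)%O ->
    count (fun H => ~~ (H <= F)%O) (dg_J G) = 2%N ->
    relvec (delta G).

(* The span of the relation vectors: v is zero in MD(L) iff inspan v. *)
Inductive inspan : (diagram L -> rat) -> Prop :=
| span0 : inspan (fun _ => 0)
| spanS (c : rat) (r v : diagram L -> rat) :
    relvec r -> inspan v -> inspan (fun D => c * r D + v D)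
| span_ext (v w : diagram L -> rat) :
    inspan v -> (forall D, v D = w D) -> inspan w.

End Diagrams.

Lemma id_modext {d : Order.disp_t} (L : finTBLatticeType d) :
  modext (fun x : L => x).
Proof.
split.
- split.
  + by move=> x y.
  + by move=> x y.
  + by [].
  + by move=> x y.
  + by move=> a.
- move=> F'; rewrite meet1x join1x addnC; reflexivity.
- move=> y; split; first by move=> _; exists y.
  by move=> _; exact: lex1.
Qed.

Definition emptyDiagram {d : Order.disp_t} (L : finTBLatticeType d)
    (hL : geometric L) : diagram L :=
  @Diagram d L d L hL (fun x : L => x) (id_modext L) [::] erefl.

(* Main.v *)
Require Import Defs.
From HB Require Import structures.
From mathcomp Require Import all_boot all_order all_algebra.
From mathcomp Require Import boolp zify ring.
Set Implicit Arguments. Unset Strict Implicit. Unset Printing Implicit Defensive.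
Import Order.TTheory GRing.Theory.
Open Scope order_scope.

Section Rank.
Context {d : Order.disp_t} (T : finTBLatticeType d).
Implicit Types x y z F : T.

Lemma maxchainP F k :
  maxchain F k <-> exists s : seq T, [/\ size s = k, path (@covers _ T) \bot s & last \bot s = F].
Proof.
split.
- by case/existsP=> t /andP[hp /eqP hl]; exists (val t); rewrite size_tuple.
- case=> s [hs hp hl]; apply/existsP.
  have hs' : size s == k by rewrite hs.
  by exists (Tuple hs'); rewrite /= hp hl eqxx.
Qed.

Lemma covers_lt x y : covers x y -> x < y.
Proof. by case/andP. Qed.

Lemma maxchain_lt_card F k : maxchain F k -> (k < #|T|)%N.
Proof.
case/maxchainP=> s [<- hp _].
have hs : sorted <%O (\bot :: s).
  by rewrite /=; apply: sub_path hp => a b /covers_lt.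
have hu := sorted_uniq (@lt_trans _ T) (@ltxx _ T) hs.
have := max_card (mem (\bot :: s)).
by rewrite (card_uniqP hu).
Qed.

Lemma ex_chain x y : x <= y -> exists s, path (@covers _ T) x s /\ last x s = y.
Proof.
have [n hn] : exists n, leq #|[set z | (x <= z) && (z < y)]| n by eexists.
elim: n y hn => [|n IH] y hn hxy.
- case: (eqVneq x y) => [<-|hne]; first by exists [::].
  have xS : x \in [set z | (x <= z) && (z < y)] by rewrite inE lexx lt_neqAle hne hxy.
  have : (0 < #|[set z | (x <= z)%O && (z < y)%O]|)%N by apply/card_gt0P; exists x.
  by rewrite leqn0 in hn; rewrite (eqP hn).
- case: (eqVneq x y) => [<-|hne]; first by exists [::].
  set S := [set z | (x <= z) && (z < y)].
  have xS : x \in S by rewrite inE lexx lt_neqAle hne hxy.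
  case: (arg_maxnP (fun z => #|[set w | w <= z]|) xS) => z zS zmax.
  have zS2 : z \in S by []. move: (zS2); rewrite /S inE => /andP[hxz hzy].
  have hcov : covers z y.
    rewrite /covers hzy /=; apply/forallP => w; apply/negP => /andP[hzw hwy].
    have wS : w \in S by rewrite /S inE hwy (le_trans hxz (ltW hzw)).
    have := zmax w (wS : _).
    have hp : [set u | u <= z] \proper [set u | u <= w].
      apply/properP; split.
      + by apply/subsetP => u; rewrite !inE => h; exact: le_trans h (ltW hzw).
      + by exists w; rewrite !inE ?lexx // lt_geF.
    move=> h; move: (proper_card hp); rewrite ltnNge. move: h => /= ->. done.
  have hsub : [set u | (x <= u) && (u < z)] \proper S.
    apply/properP; split.
    + by apply/subsetP => u; rewrite !inE => /andP[-> h] /=; exact: lt_trans h hzy.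
    + by exists z; rewrite ?inE ?hxz ?hzy ?ltxx.
  have := proper_card hsub => hlt.
  have hzn : (#|[set u | (x <= u)%O && (u < z)%O]| <= n)%N by rewrite -ltnS (leq_trans hlt hn).
  have [s [hp hl]] := IH z hzn hxz.
  by exists (rcons s y); rewrite rcons_path last_rcons hp hl hcov.
Qed.

Lemma ex_maxchain F : exists k, maxchain F k.
Proof.
have [s [hp hl]] := ex_chain (le0x F).
by exists (size s); apply/maxchainP; exists s.
Qed.

Lemma rkE F k : ranked T -> maxchain F k -> rk F = k.
Proof.
move=> hr hk; apply/eqP; rewrite eqn_leq; apply/andP; split.
- apply/bigmax_leqP => i _; case: ifP => // h.
  by rewrite (hr _ _ _ h hk).
- have hk' := maxchain_lt_card hk.
  apply: leq_trans (leq_bigmax (Ordinal hk')).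
  by rewrite /= hk.
Qed.

Lemma rk_chain F : ranked T -> maxchain F (rk F).
Proof. by move=> hr; have [k hk] := ex_maxchain F; rewrite (rkE hr hk). Qed.

Lemma rk0 : ranked T -> rk (\bot : T) = 0%N.
Proof. by move=> hr; apply: rkE => //; apply/maxchainP; exists [::]. Qed.

Lemma rk_chain_ext x y s : ranked T -> path (@covers _ T) x s -> last x s = y ->
  rk y = (rk x + size s)%N.
Proof.
move=> hr hp hl; apply: rkE => //.
case/maxchainP: (rk_chain x hr) => s1 [h1 hp1 hl1].
apply/maxchainP; exists (s1 ++ s); rewrite size_cat h1 cat_path last_cat hl1 hp1 hp.
by split.
Qed.

Lemma rk_lt x y : ranked T -> x < y -> (rk x < rk y)%N.
Proof.
move=> hr hxy; have [s [hp hl]] := ex_chain (ltW hxy).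
rewrite (rk_chain_ext hr hp hl); case: s hp hl => [_ /= hl|a s _ _].
  by rewrite hl ltxx in hxy.
by rewrite /= addnS ltnS leq_addr.
Qed.

Lemma rk_le x y : ranked T -> x <= y -> (rk x <= rk y)%N.
Proof.
move=> hr; rewrite le_eqVlt => /orP[/eqP->//|h]; exact: ltnW (rk_lt hr h).
Qed.

Lemma rk_eq x y : ranked T -> x <= y -> (rk y <= rk x)%N -> x = y.
Proof.
move=> hr hxy hyx; apply/eqP; move: hxy; rewrite le_eqVlt => /orP[//|h].
by have := rk_lt hr h; rewrite ltnNge hyx.
Qed.

Lemma rk_eq0 x : ranked T -> rk x = 0%N -> x = \bot.
Proof.
move=> hr h; apply/esym/(rk_eq hr (le0x x)); by rewrite h.
Qed.

Lemma covers_rk x y : ranked T -> covers x y -> rk y = (rk x).+1.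
Proof.
move=> hr hc; rewrite (@rk_chain_ext x y [:: y]) //= ?andbT ?addn1 //.
Qed.

Lemma pred_rk x : ranked T -> x != \bot -> exists w, w < x /\ rk x = (rk w).+1.
Proof.
move=> hr hx; have [s [hp hl]] := ex_chain (le0x x).
case/lastP: s hp hl => [_ /= hl|s a]; first by rewrite hl eqxx in hx.
rewrite rcons_path last_rcons => /andP[hp hc] hl; subst x.
exists (last \bot s); split; first exact: covers_lt.
exact: covers_rk.
Qed.

End Rank.

Lemma rk_mono {d1 d2 : Order.disp_t} (T1 : finTBLatticeType d1) (T2 : finTBLatticeType d2)
  (f : T1 -> T2) : ranked T1 -> ranked T2 -> (forall x y, x < y -> f x < f y) ->
  forall x, (rk x <= rk (f x))%N.
Proof.
move=> h1 h2 hf.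
have : forall n (x : T1), rk x = n -> (n <= rk (f x))%N.
  elim=> [//|n IH] x hx.
  have hxb : x != \bot by apply/eqP => hb; rewrite hb rk0 in hx.
  have [w [hw hrw]] := pred_rk h1 hxb.
  have hwn : rk w = n by apply/eqP; rewrite -eqSS -hrw hx.
  have hle := IH w hwn.
  exact: leq_ltn_trans hle (rk_lt h2 (hf _ _ hw)).
by move=> H x; exact: H.
Qed.


Section Atomic.
Context {d : Order.disp_t} (T : finTBLatticeType d).
Lemma atomic_le : atomic T -> forall x y : T,
  (forall a, atom a -> a <= x -> a <= y) -> x <= y.
Proof.
move=> hA x y h; have [A [hat hx]] := hA x.
rewrite [X in X <= _]hx; apply/joinsP => a ha; apply: h; first exact: hat.
by rewrite hx; exact: joins_sup.
Qed.
Lemma atomic_of : (forall x y : T, (forall a, atom a -> a <= x -> a <= y) -> x <= y) ->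
  atomic T.
Proof.
move=> h F; exists [set a | atom a && (a <= F)]; split.
  by move=> a; rewrite inE => /andP[].
apply/le_anti/andP; split.
- apply: h => a ha haF; apply: joins_sup; by rewrite inE ha haF.
- by apply/joinsP => a; rewrite inE => /andP[].
Qed.
End Atomic.

Definition ivl {d : Order.disp_t} (E : finTBLatticeType d) (X : E) : Type :=
  {y : E | y <= X}.

Section IvlInst.
Context {d : Order.disp_t} (E : finTBLatticeType d) (X : E).
HB.instance Definition _ := SubType.copy (ivl X) {y : E | y <= X}.
HB.instance Definition _ := Finite.copy (ivl X) {y : E | y <= X}.
Fact ivl_meet : meet_closed (fun y : E => y <= X).
Proof. move=> x y; rewrite !unfold_in /= => hx hy; exact: le_trans (leIl _ _) hx. Qed.
Fact ivl_join : join_closed (fun y : E => y <= X).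
Proof. by move=> x y; rewrite !unfold_in /= => hx hy; rewrite leUx hx hy. Qed.
Fact ivl_bot : (\bot : E) \in (fun y : E => y <= X).
Proof. by rewrite unfold_in /= le0x. Qed.
HB.instance Definition _ := Order.SubChoice_isBSubLattice.Build d E (fun y : E => y <= X) d (ivl X) ivl_meet ivl_join ivl_bot.
Definition ivl_top : ivl X := @Sub _ _ (ivl X) X (lexx X).
Fact ivl_lex1 (x : ivl X) : x <= ivl_top.
Proof. rewrite -Order.le_val /=. exact: (valP x). Qed.
HB.instance Definition _ := Order.hasTop.Build d (ivl X) ivl_lex1.
End IvlInst.

Section IvlTheory.
Context {d : Order.disp_t} (E : finTBLatticeType d) (X : E).
Implicit Types x y : ivl X.

Lemma ivl_le x y : (x <= y) = (val x <= val y).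
Proof. by rewrite -Order.le_val. Qed.
Lemma ivl_lt x y : (x < y) = (val x < val y).
Proof. by rewrite !lt_neqAle ivl_le (inj_eq val_inj). Qed.
Lemma ivl_valU x y : val (x `|` y) = val x `|` val y.
Proof. by []. Qed.
Lemma ivl_valI x y : val (x `&` y) = val x `&` val y.
Proof. by []. Qed.
Lemma ivl_val0 : val (\bot : ivl X) = \bot.
Proof. by []. Qed.
Lemma ivl_val1 : val (\top : ivl X) = X.
Proof. by []. Qed.
Lemma ivl_valP x : val x <= X.
Proof. exact: valP x. Qed.

Lemma ivl_covers x y : covers x y -> covers (val x) (val y).
Proof.
case/andP; rewrite ivl_lt => hlt /forallP h; rewrite /covers hlt /=; apply/forallP => z; apply/negP => /andP[h1 h2].
have hz : z <= X by exact: le_trans (ltW h2) (ivl_valP y).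
have := h (Sub z hz); by rewrite !ivl_lt SubK h1 h2.
Qed.

Lemma ivl_maxchain y k : maxchain y k -> maxchain (val y) k.
Proof.
case/maxchainP=> s [hs hp hl]; apply/maxchainP; exists (map val s).
rewrite size_map -ivl_val0 last_map hl path_map; split=> //.
by apply: sub_path hp => a b /ivl_covers.
Qed.

Lemma ivl_ranked : ranked E -> ranked (ivl X).
Proof.
move=> hr F k1 k2 h1 h2; exact: hr (ivl_maxchain h1) (ivl_maxchain h2).
Qed.

Lemma ivl_rk y : ranked E -> rk y = rk (val y).
Proof.
move=> hr; have [k hk] := ex_maxchain y.
by rewrite (rkE (ivl_ranked hr) hk) (rkE hr (ivl_maxchain hk)).
Qed.

Lemma ivl_atom y : ranked E -> atom y = atom (val y).
Proof. by move=> hr; rewrite /atom ivl_rk. Qed.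

Lemma ivl_geometric : geometric E -> geometric (ivl X).
Proof.
case=> hr hA hs; split.
- exact: ivl_ranked.
- apply: atomic_of => x y h; rewrite ivl_le; apply: (atomic_le hA) => a ha hax.
  have haX : a <= X by exact: le_trans hax (ivl_valP x).
  have := h (Sub a haX); rewrite ivl_atom // !ivl_le SubK => /(_ ha hax); exact.
- by move=> F1 F2; rewrite !ivl_rk // ivl_valI ivl_valU; exact: hs.
Qed.
End IvlTheory.

Section Prod.
Context {d1 d2 : Order.disp_t} (T1 : finTBLatticeType d1) (T2 : finTBLatticeType d2).
Local Notation P := (T1 *p T2)%type.
Implicit Types u v : P.

Lemma prod_le u v : (u <= v) = (u.1 <= v.1) && (u.2 <= v.2).
Proof. by []. Qed.
Lemma prod_lt u v : (u < v) = (u != v) && (u.1 <= v.1) && (u.2 <= v.2).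
Proof. by rewrite lt_neqAle prod_le andbA. Qed.

Lemma neq1 u v : u.1 != v.1 -> u != v.
Proof. by apply: contraNneq => ->. Qed.
Lemma neq2 u v : u.2 != v.2 -> u != v.
Proof. by apply: contraNneq => ->. Qed.

Lemma prod_covers u v : covers u v ->
  (covers u.1 v.1 /\ u.2 = v.2) \/ (u.1 = v.1 /\ covers u.2 v.2).
Proof.
case/andP; rewrite prod_lt => /andP[/andP[hne h1] h2] /forallP hb.
have nb : forall w : P, u < w -> w < v -> False.
  by move=> w hw1 hw2; have := hb w; rewrite hw1 hw2.
case: (eqVneq u.1 v.1) => [e1|n1].
- right; split=> //; rewrite /covers lt_neqAle h2 andbT.
  apply/andP; split.
    apply: contraNneq hne => e2; case: u v e1 e2 {hb nb h1 h2} => [? ?] [? ?] /= -> -> //.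
  apply/forallP => w; apply/negP => /andP[hw1 hw2].
  apply: (nb ((u.1, w) : P)).
  + by rewrite prod_lt /= lexx (ltW hw1) (@neq2 u (u.1, w) (negbT (lt_eqF hw1))).
  + by rewrite prod_lt /= h1 (ltW hw2) (@neq2 (u.1, w) v (negbT (lt_eqF hw2))).
- case: (eqVneq u.2 v.2) => [e2|n2].
  + left; split=> //; rewrite /covers lt_neqAle n1 h1 /=.
    apply/forallP => w; apply/negP => /andP[hw1 hw2].
    apply: (nb ((w, u.2) : P)).
    * by rewrite prod_lt /= lexx (ltW hw1) (@neq1 u (w, u.2) (negbT (lt_eqF hw1))).
    * by rewrite prod_lt /= h2 (ltW hw2) (@neq1 (w, u.2) v (negbT (lt_eqF hw2))).
  + exfalso; apply: (nb ((v.1, u.2) : P)).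
    * by rewrite prod_lt /= lexx h1 (@neq1 u (v.1, u.2) n1).
    * by rewrite prod_lt /= lexx h2 (@neq2 (v.1, u.2) v n2).
Qed.

Hypothesis (r1 : ranked T1) (r2 : ranked T2).

Lemma prod_path u s : path (@covers _ P) u s ->
  (rk (last u s).1 + rk (last u s).2 = rk u.1 + rk u.2 + size s)%N.
Proof.
elim: s u => [|v s IH] u /=; first by rewrite addn0.
case/andP=> hc hp; rewrite (IH _ hp).
case: (prod_covers hc) => [[hc1 e2]|[e1 hc2]].
- by rewrite (covers_rk r1 hc1) e2 addSn addnS.
- by rewrite (covers_rk r2 hc2) e1 addnS addnS.
Qed.

Lemma prod_maxchain (F : P) k : maxchain F k -> k = (rk F.1 + rk F.2)%N.
Proof.
case/maxchainP=> s [<- hp hl]; have := prod_path hp.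
by rewrite hl /= !rk0.
Qed.

Lemma prod_ranked : ranked P.
Proof. by move=> F k1 k2 /prod_maxchain -> /prod_maxchain ->. Qed.

Lemma prod_rk (F : P) : rk F = (rk F.1 + rk F.2)%N.
Proof. exact: prod_maxchain (rk_chain F prod_ranked). Qed.

End Prod.

Lemma prod_geometric {d1 d2 : Order.disp_t} (T1 : finTBLatticeType d1) (T2 : finTBLatticeType d2) :
  geometric T1 -> geometric T2 -> geometric (T1 *p T2)%type.
Proof.
case=> r1 a1 s1 [r2 a2 s2]; split.
- exact: prod_ranked.
- apply: atomic_of => x y h; rewrite prod_le; apply/andP; split.
  + apply: (atomic_le a1) => a ha hax.
    have := h ((a, \bot) : (T1 *p T2)%type).
    rewrite /atom prod_rk //= rk0 // addn0 prod_le /= le0x !andbT.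
    by move/(_ ha hax); rewrite prod_le /= => /andP[].
  + apply: (atomic_le a2) => a ha hax.
    have := h ((\bot, a) : (T1 *p T2)%type).
    rewrite /atom prod_rk //= rk0 // add0n prod_le /= le0x /=.
    by move/(_ ha hax); rewrite prod_le /= => /andP[].
- move=> F1 F2; rewrite !prod_rk //=.
  have := s1 F1.1 F2.1; have := s2 F1.2 F2.2; lia.
Qed.

Lemma emb_mono {d1 d2 : Order.disp_t} (T1 : finTBLatticeType d1) (T2 : finTBLatticeType d2)
  (f : T1 -> T2) : embedding f -> forall x y, (f x <= f y) = (x <= y).
Proof.
case=> hinj hmon _ hj _ x y; apply/idP/idP; last exact: hmon.
by rewrite !leEjoin -hj => /eqP/hinj ->.
Qed.

Lemma emb_lt {d1 d2 : Order.disp_t} (T1 : finTBLatticeType d1) (T2 : finTBLatticeType d2)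
  (f : T1 -> T2) : embedding f -> forall x y, (f x < f y) = (x < y).
Proof.
move=> he x y; rewrite !lt_neqAle (emb_mono he); case: he => hinj _ _ _ _.
by rewrite (inj_eq hinj).
Qed.

Lemma nontriv_of {d : Order.disp_t} (T : finTBLatticeType d) : (\top : T) != \bot -> nontrivial T.
Proof. by move=> h; apply/card_gt1P; exists \top, \bot; split. Qed.

Lemma nontriv_top {d : Order.disp_t} (T : finTBLatticeType d) : nontrivial T -> (\top : T) != \bot.
Proof.
case/card_gt1P => x [y [_ _ hxy]]; apply/eqP => e.
have ex : x = \bot by apply/eqP; rewrite -lex0 -e lex1.
have ey : y = \bot by apply/eqP; rewrite -lex0 -e lex1.
by rewrite ex ey eqxx in hxy.
Qed.

Section Construct.
Context {dL : Order.disp_t} (L : finTBLatticeType dL) (hnt : nontrivial L).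
Context {dE : Order.disp_t} (E : finTBLatticeType dE) (hE : geometric E).
Context (iota : L -> E) (hi : modext iota) (J : seq E) (hJ : all (@atom _ E) J).
Hypothesis (hJne : J != [::]).
Hypothesis (hmeet : joinJ J `&` iota \top = \bot).
Hypothesis (htop : iota \top `|` joinJ J = \top).

Let F := iota \top.
Let X := joinJ J.
Let rE : ranked E. Proof. by case: hE. Qed.
Let sE : semimodular E. Proof. by case: hE. Qed.
Let hemb : embedding iota. Proof. by case: hi. Qed.
Let hmodF : modular_flat F. Proof. by case: hi. Qed.
Let himg : forall y : E, y <= F <-> exists x, iota x = y. Proof. by case: hi. Qed.

Lemma iota_leF x : iota x <= F.
Proof. by rewrite /F (emb_mono hemb) lex1. Qed.

Lemma J_leX H : H \in J -> H <= X.
Proof. by move=> hH; rewrite /X /joinJ; exact: (joins_sup_seq _ hH). Qed.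

Lemma meetF0 b : b <= X -> b `&` F = \bot.
Proof. by move=> hb; apply/eqP; rewrite -lex0 -hmeet; exact: leI2 hb (lexx _). Qed.

Lemma key_rk a b : a <= F -> b <= X -> rk (a `|` b) = (rk a + rk b)%N /\ F `&` (a `|` b) = a.
Proof.
move=> ha hb.
have h0 : rk (a `&` b) = 0%N.
  rewrite (_ : a `&` b = \bot) ?rk0 //; apply/eqP; rewrite -lex0 -(meetF0 hb).
  by rewrite meetC leI2.
have hs := sE a b; rewrite h0 add0n in hs.
have hm1 := hmodF (a `|` b).
have hFc : F `|` (a `|` b) = F `|` b by rewrite joinA (join_l ha).
have hm2 := hmodF b; rewrite meetC (meetF0 hb) rk0 // add0n in hm2.
rewrite hFc hm2 in hm1.
have haF : a <= F `&` (a `|` b) by rewrite lexI ha leUl.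
have hle := rk_le rE haF.
split; first lia.
apply/esym/(rk_eq rE haF); lia.
Qed.

Local Notation P := (ivl F *p ivl X)%type.

Definition iotaP (x : L) : P := (insubd (\bot : ivl F) (iota x), \bot).
Definition JP : seq P := map (fun H => ((\bot : ivl F), insubd (\bot : ivl X) H)) J.
Definition psi (p : P) : E := val p.1 `|` val p.2.

Lemma val_iotaP x : val (iotaP x).1 = iota x.
Proof. by rewrite /iotaP /= insubdK // unfold_in /= iota_leF. Qed.

Let r1 : ranked (ivl F). Proof. exact: ivl_ranked. Qed.
Let r2 : ranked (ivl X). Proof. exact: ivl_ranked. Qed.

Lemma P_geom : geometric P.
Proof. by apply: prod_geometric; apply: ivl_geometric. Qed.

Lemma rkP (p : P) : rk p = (rk (val p.1) + rk (val p.2))%N.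
Proof. by rewrite prod_rk // !ivl_rk. Qed.

Lemma atomP (p : P) : atom p ->
  (atom (val p.1) /\ p.2 = \bot) \/ (p.1 = \bot /\ atom (val p.2)).
Proof.
rewrite /atom rkP => /eqP h.
case: (posnP (rk (val p.1))) => h1.
- right; split; last by apply/eqP; lia.
  by apply: val_inj; rewrite ivl_val0; apply: rk_eq0.
- left; split; first by apply/eqP; lia.
  by apply: val_inj; rewrite ivl_val0; apply: rk_eq0 => //; lia.
Qed.

Lemma iotaP_emb : embedding iotaP.
Proof.
case: hemb => hinj hmon h0 hj hat; split.
- move=> x y [/(congr1 val)]; rewrite -/(val (iotaP x).1) -/(val (iotaP y).1).
  by rewrite !val_iotaP => /hinj.
- move=> x y hxy; rewrite prod_le /= lexx andbT ivl_le.
  by rewrite -/(val (iotaP x).1) -/(val (iotaP y).1) !val_iotaP hmon.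
- rewrite /iotaP; congr (_, _); apply: val_inj.
  by rewrite -/(val (iotaP \bot).1) val_iotaP h0.
- move=> x y; rewrite /iotaP; congr (_, _); last by rewrite joinxx.
  apply: val_inj; rewrite ivl_valU.
  by rewrite -/(val (iotaP x).1) -/(val (iotaP y).1) -/(val (iotaP (x `|` y)).1) !val_iotaP hj.
- move=> a ha; rewrite /atom rkP val_iotaP (_ : val (iotaP a).2 = \bot) ?rk0 ?addn0 //; exact: hat.

Qed.

Lemma iotaP_top : iotaP \top = (\top, \bot).
Proof. by congr (_, _); apply: val_inj; rewrite -/(val (iotaP \top).1) val_iotaP ivl_val1. Qed.

Lemma iotaP_modext : modext iotaP.
Proof.
split.
- exact: iotaP_emb.
- rewrite iotaP_top => q; rewrite !rkP /=.
  have h1 : sval q.1 <= F := valP q.1.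
  rewrite meet0x join0x (meet_r h1) (join_l h1). rewrite !(rk0 rE). by rewrite !addn0 addnCA.


- move=> y; rewrite iotaP_top; split.
  + rewrite prod_le lex1 /= => hy2.
    have e2 : y.2 = \bot by apply/eqP; rewrite -lex0.
    have [x hx] := (himg (val y.1)).1 (ivl_valP _).
    exists x; case: y hy2 e2 hx => [y1 y2] /= _ -> hx; congr (_, _).
    by apply: val_inj; rewrite -/(val (iotaP x).1) val_iotaP.
  + case=> x <-; rewrite -iotaP_top (emb_mono iotaP_emb); exact: lex1.
Qed.

Lemma JP_atoms : all (@atom _ P) JP.
Proof.
apply/allP => p /mapP[H hH ->].
have e : val (insubd (\bot : ivl X) H) = H by rewrite insubdK // unfold_in /= J_leX.
move: e; rewrite /atom rkP /= => ->; rewrite (rk0 rE) add0n.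
exact: (allP hJ).
Qed.

Definition DP : diagram L := Diagram P_geom iotaP_modext JP_atoms.
Definition DG : diagram L := Diagram hE hi hJ.

Lemma psi_emb : embedding psi.
Proof.
split.
- move=> p q; rewrite /psi => he.
  have [e1 _] := key_rk (ivl_valP p.1) (ivl_valP p.2).
  have [e1' f1'] := key_rk (ivl_valP q.1) (ivl_valP q.2).
  have [_ f1] := key_rk (ivl_valP p.1) (ivl_valP p.2).
  have ha : p.1 = q.1 by apply: val_inj; rewrite -f1 -f1' he.
  have hb2 : val p.2 `|` val q.2 <= X by rewrite leUx !ivl_valP.
  have [e3 _] := key_rk (ivl_valP p.1) hb2.
  have hc : val p.1 `|` (val p.2 `|` val q.2) = val p.1 `|` val p.2.
    by rewrite joinA he -joinA joinxx -he.
  have hc' : val q.1 `|` (val p.2 `|` val q.2) = val q.1 `|` val q.2.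
    by rewrite -[in LHS]ha hc he.
  have [e3' _] := key_rk (ivl_valP q.1) hb2.
  rewrite hc e1 in e3; rewrite hc' e1' in e3'.
  have h2 : val p.2 = val p.2 `|` val q.2.
    by apply: (rk_eq rE (leUl _ _)); lia.
  have h2' : val q.2 = val p.2 `|` val q.2.
    by apply: (rk_eq rE (leUr _ _)); lia.
  have hb : p.2 = q.2 by apply: val_inj; rewrite h2 -h2'.
  by rewrite [p]surjective_pairing [q]surjective_pairing ha hb.
- move=> p q; rewrite prod_le !ivl_le => /andP[h1 h2]; exact: leU2.
- by rewrite /psi ivl_val0 joinxx.
- by move=> p q; rewrite /psi !ivl_valU joinACA.
- move=> p /atomP [[ha h]|[h ha]]; rewrite /psi h ivl_val0.
  + by rewrite joinx0.
  + by rewrite join0x.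
Qed.

Lemma rk_top_eq : rk (\top : P) = rk (\top : E).
Proof.
rewrite rkP !ivl_val1.
have := hmodF X; rewrite meetC hmeet (rk0 rE) add0n htop => ->.
done.
Qed.

Lemma psi_iota x : iota x = psi (iotaP x).
Proof. by rewrite /psi val_iotaP ivl_val0 joinx0. Qed.

Lemma psi_JP : J = map psi JP.
Proof.
rewrite /JP -map_comp -[LHS]map_id; apply/eq_in_map => H hH /=.
rewrite /psi ivl_val0 join0x insubdK // unfold_in /= J_leX //.
Qed.

Lemma DP_split : splits_off (Fiota DP).
Proof.
rewrite /Fiota /= iotaP_top.
exists _, _, (ivl F), (ivl X), (fun p : P => p); split.
- by split; apply: ivl_geometric.
- split; apply: nontriv_of; rewrite -(inj_eq val_inj) ivl_val1 ivl_val0.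
  + case: hemb => hinj _ h0 _ _; rewrite -h0 /F (inj_eq hinj); exact: nontriv_top.
  + case: J hJ hJne (@J_leX) => [//|H J'] /= /andP[hH _] _ /(_ H (mem_head _ _)) hHX.
    apply/eqP => hX; move: hH; rewrite hX in hHX.
    have -> : H = \bot by apply/eqP; rewrite -lex0.
    by rewrite /atom (rk0 rE).
- by exists id.
- by [].
- by [].
Qed.

Lemma DG_span : inspan (delta DG).
Proof.
have r4 : relvec (delta DP) := rel4 DP_split.
have rr2 := @rel2 _ L DP DG psi psi_emb rk_top_eq psi_iota psi_JP.
apply: span_ext (spanS (-1)%R rr2 (spanS 1%R r4 (span0 L))) _ => D /=.
by rewrite GRing.mul1r GRing.addr0 GRing.mulN1r GRing.opprB GRing.subrK.
Qed.
End Construct.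

Lemma no_split_top {d : Order.disp_t} (E : finTBLatticeType d) : ~ splits_off (\top : E).
Proof.
case=> d1 [d2 [E1 [E2 [psi [_ [_ hn2] [g hg1 hg2] hle h2]]]]].
have hb : forall y : E2, y = \bot.
  move=> y; have := lex1 (g (\bot, y)); rewrite hle hg2 h2 /= => /andP[_].
  by rewrite lex0 => /eqP.
by move: (nontriv_top hn2); rewrite (hb \top) eqxx.
Qed.

Section Part2.
Context {dL : Order.disp_t} (L : finTBLatticeType dL).
Local Open Scope ring_scope.

Definition good (D : diagram L) : Prop := dg_J D = [::] /\ Fiota D = \top%O.
Definition repr (s : seq (rat * diagram L)) (D : diagram L) : rat :=
  \sum_(p <- s) (if pselect (D = p.2) then p.1 else 0).
Definition total (s : seq (rat * diagram L)) : rat :=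
  \sum_(p <- s) (if pselect (good p.2) then p.1 else 0).
Definition Inv (v : diagram L -> rat) : Prop :=
  exists s, (forall D, good D -> v D = repr s D) /\ total s = 0.

Lemma delta_ngood (G D : diagram L) : ~ good G -> good D -> delta G D = 0.
Proof. by move=> hG hD; rewrite /delta; case: pselect => // e; subst D. Qed.

Lemma Inv0 (r : diagram L -> rat) : (forall D, good D -> r D = 0) -> Inv r.
Proof. move=> h; exists [::]; split; last by rewrite /total big_nil.
by move=> D hD; rewrite h // /repr big_nil. Qed.

Lemma emb_top {d1 d2 : Order.disp_t} (E1 : finTBLatticeType d1) (E2 : finTBLatticeType d2)
  (f : E1 -> E2) : geometric E1 -> geometric E2 -> embedding f ->
  rk (\top : E1) = rk (\top : E2) -> f \top = \top.
Proof.
case=> r1 _ _ [r2 _ _] he hrk.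
have hm : forall x, (rk x <= rk (f x))%N.
  by apply: rk_mono => // x y; rewrite (emb_lt he).
apply: (rk_eq r2 (lex1 _)); rewrite -hrk; exact: hm.
Qed.

Lemma rel2_good (G G' : diagram L) (phi : dg_E G -> dg_E G') :
  embedding phi -> rk (\top%O : dg_E G) = rk (\top%O : dg_E G') ->
  (forall x : L, dg_iota G' x = phi (dg_iota G x)) ->
  dg_J G' = map phi (dg_J G) -> (good G <-> good G').
Proof.
move=> he hrk hio hJ; have ht := emb_top (dg_geom G) (dg_geom G') he hrk.
rewrite /good /Fiota hio hJ; split.
- by case=> -> ->.
- case; case: (dg_J G) => [_|//] h; split=> //.
  apply/eqP; apply: contraT => hne.
  have hlt : (dg_iota G \top < \top)%O by rewrite lt_neqAle hne lex1.
  by move: hlt; rewrite -(emb_lt he) h ht ltxx.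
Qed.

Lemma relvec_inv (r : diagram L -> rat) : relvec r -> Inv r.
Proof.
case.
- move=> dE E hE i hi J hJ p q hJ' hpq; apply: Inv0 => D hD.
  have hn1 : J <> [::] by move=> e; move: hpq; rewrite e /= ltn0 andbF.
  have hn2 : tswap J p q <> [::].
    move=> e; have := size_set_nth \bot%O (set_nth \bot%O J p (nth \bot%O J q)) q (nth \bot%O J p).
    rewrite -/(tswap J p q) e /=; lia.
  have g1 : ~ good (Diagram hE hi hJ) by case=> /= /hn1.
  have g2 : ~ good (Diagram hE hi hJ') by case=> /= /hn2.
  by rewrite (delta_ngood g1 hD) (delta_ngood g2 hD) addr0.
- move=> G G' phi he hrk hio hJ.
  have hg := rel2_good he hrk hio hJ.
  case: (pselect (good G)) => hG.
  + exists [:: (1, G); (-1, G')]; split.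
    * move=> D hD; rewrite /repr !big_cons big_nil /delta /=.
      by case: pselect => ?; case: pselect => ? /=; ring.
    * rewrite /total !big_cons big_nil /=.
      case: pselect => [_|n] /=; last by case: n.
      case: pselect => [_|n] /=; [ring | by case: n; apply/hg].
  + have hG' : ~ good G' by move/hg.
    by apply: Inv0 => D hD; rewrite !delta_ngood // subrr.
- move=> G hlt; apply: Inv0 => D hD; apply: delta_ngood => // -[_ hF].
  by move: hlt; rewrite hF join1x ltxx.
- move=> G hs; apply: Inv0 => D hD; apply: delta_ngood => // -[_ hF].
  by move: hs; rewrite hF => /no_split_top.
- move=> G F hF hle hc; apply: Inv0 => D hD; apply: delta_ngood => // -[hJ _].
  by move: hc; rewrite hJ.
Qed.

Lemma span_inv (v : diagram L -> rat) : inspan v -> Inv v.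
Proof.
elim=> [|c r w hr _ [s [hs ht]]|v' w _ [s [hs ht]] he].
- by apply: Inv0.
- have [s1 [hs1 ht1]] := relvec_inv hr.
  exists (map (fun p => (c * p.1, p.2)) s1 ++ s); split.
  + move=> D hD; rewrite /repr big_cat big_map /= -/(repr s D) -hs // hs1 //.
    rewrite /repr mulr_sumr; congr (_ + _); apply: eq_bigr => p _.
    by case: pselect => _ /=; rewrite ?mulr0.
  + rewrite /total big_cat big_map /= -/(total s) ht addr0.
    transitivity (c * total s1); last by rewrite ht1 mulr0.
    rewrite /total mulr_sumr; apply: eq_bigr => p _.
    by case: pselect => _ /=; rewrite ?mulr0.
- by exists s; split=> // D hD; rewrite -he hs.
Qed.

Lemma group (e : diagram L) s : good e ->
  (forall D, good D -> D <> e -> repr s D = 0) -> total s = repr s e.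
Proof.
move=> he.
have [n hn] : exists n, (size s <= n)%N by eexists.
elim: n s hn => [|n IH] s hn hz.
  by case: s hn hz => // _ _; rewrite /total /repr !big_nil.
case: s hn hz => [|p0 s'] hn hz; first by rewrite /total /repr !big_nil.
set s := p0 :: s'; set G0 := p0.2.
pose q := fun p : rat * diagram L => `[< p.2 = G0 >].
set s2 := filter (predC q) s.
have Ls : (size s2 <= n)%N.
  rewrite /s2 /s /= /q /G0 asboolT //= size_filter.
  exact: leq_trans (count_size _ _) _.
have L1 : forall D, D <> G0 -> repr s D = repr s2 D.
  move=> D hD; rewrite /repr (bigID q) /= big_filter.
  rewrite big1 ?add0r // => p /asboolP hp; case: pselect => // ee.
  by case: hD; rewrite ee.
have L2 : repr s2 G0 = 0.
  rewrite /repr big_filter big1 // => p /= /asboolP hp; case: pselect => // ee.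
  by case: hp; rewrite ee.
have L3 : total s = (if pselect (good G0) then repr s G0 else 0) + total s2.
  rewrite /total (bigID q) /= big_filter; congr (_ + _).
  case: pselect => hg.
  - have E2 : \sum_(p <- s | ~~ q p) (if pselect (G0 = p.2) then p.1 else 0) = 0.
      by rewrite -big_filter; exact: L2.
    rewrite /repr [RHS](bigID q) /= E2 addr0; apply: eq_bigr => p /asboolP hp.
    rewrite hp; case: pselect => [_|nn] /=; last by case: nn.
    by case: pselect => [_|nn] /=; last by case: nn.
  - by rewrite big1 // => p /asboolP hp; rewrite hp; case: pselect => [h|].
case: (pselect (G0 = e)) => hGe.
- have hz2 : forall D, good D -> D <> e -> repr s2 D = 0.
    by move=> D hD hDe; rewrite -L1 ?hGe //; exact: hz.
  have := IH s2 Ls hz2; rewrite -hGe L2 => h2.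
  rewrite L3 h2 addr0; case: pselect => // hng.
  by case: hng; rewrite hGe.
- have hz2 : forall D, good D -> D <> e -> repr s2 D = 0.
    move=> D hD hDe; case: (pselect (D = G0)) => [->|hDG]; first exact: L2.
    by rewrite -L1 //; exact: hz.
  have := IH s2 Ls hz2; rewrite -L1; last by move=> h; apply: hGe.
  move=> h2; rewrite L3 h2; case: pselect => hg; last by rewrite add0r.
  by rewrite hz ?add0r // => h; apply: hGe.
Qed.

Lemma empty_nonzero (hL : geometric L) : ~ inspan (delta (emptyDiagram hL)).
Proof.
move=> /span_inv [s [hs ht]].
have hge : good (emptyDiagram hL) by [].
have hz : forall D, good D -> D <> emptyDiagram hL -> repr s D = 0.
  move=> D hD hDe; rewrite -hs // /delta; by case: pselect.
have := group hge hz; rewrite ht -hs // /delta; case: pselect => // _ /esym.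

Qed.
End Part2.

Lemma iso_rk {dL dE : Order.disp_t} (L : finTBLatticeType dL) (E : finTBLatticeType dE)
  (hL : geometric L) (hE : geometric E) (iota : L -> E) (hi : modext iota) :
  iota \top = \top -> rk (\top : L) = rk (\top : E).
Proof.
move=> ht; case: hi => he _ himg; case: hL => rL _ _; case: hE => rE _ _.
apply/eqP; rewrite eqn_leq; apply/andP; split.
- rewrite -ht; apply: rk_mono => // x y; by rewrite (emb_lt he).
- pose g (y : E) : L := odflt \bot [pick x | iota x == y].
  have hg : forall y, iota (g y) = y.
    move=> y; have [x hx] : exists x, iota x = y by apply: (himg y).1; rewrite ht lex1.
    rewrite /g; case: pickP => [x' /eqP //|/(_ x)]; by rewrite hx eqxx.
  have hm : forall y, (rk y <= rk (g y))%N.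
    by apply: rk_mono => // y y'; rewrite -(emb_lt he) !hg.
  exact: leq_trans (hm \top) (rk_le rL (lex1 _)).
Qed.

Lemma part1 {dL : Order.disp_t} (L : finTBLatticeType dL) (hnt : nontrivial L) (G : diagram L) :
  dg_J G <> [::] -> grade0 G -> inspan (delta G).
Proof.
case: G => dE E hE iota hi J hJ /= hne hg.
case: (eqVneq (iota \top `|` joinJ J) \top) => htop.
- have hmeet : joinJ J `&` iota \top = \bot.
    have hi' := hi; case: hi' => [[_ _ h0 _ _] _ himg].
    have [x hx] := (himg _).1 (leIr (iota \top) (joinJ J)).
    have := hg x; rewrite /Fiota /= hx => /(_ erefl) hx0.
    by rewrite -hx hx0.
  have hJne : J != [::] by apply/eqP.
  exact: (@DG_span _ L hnt _ E hE iota hi J hJ hJne hmeet htop).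
- have hr : relvec (delta (Diagram hE hi hJ)).
    by apply: rel3; rewrite /Fiota /= lt_neqAle htop lex1.
  apply: span_ext (spanS 1%R hr (span0 L)) _ => D.
  by rewrite GRing.mul1r GRing.addr0.
Qed.

Close Scope order_scope.
Local Open Scope ring_scope.

Unset Implicit Arguments.
Theorem mainTheorem11 (dL : Order.disp_t) (L : finTBLatticeType dL)
    (hL : geometric L) (hnt : nontrivial L) :
  (* every modular diagram with J non-empty in grading \hat0 is zero *)
  (forall G : diagram L, dg_J G <> [::] -> grade0 G -> inspan (delta G))
  (* the class of the empty diagram (L, id, [::]) is non-zero ... *)
  /\ ~ inspan (delta (emptyDiagram hL))
  (* ... and spans MD(L, \hat0) *)
  /\ (forall G : diagram L, grade0 G ->
        exists c : rat, inspan (fun D => delta G D - c * delta (emptyDiagram hL) D))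
  (* MD(L, \hat0) is concentrated in degree 0 *)
  /\ (forall G : diagram L, grade0 G -> ~ inspan (delta G) -> deg G = 0).
Proof.
split; first by move=> G; exact: part1.
split; first exact: empty_nonzero.
split.
- move=> G hg; case: (pselect (dg_J G = [::])) => hJ; last first.
    exists 0; apply: span_ext (part1 hnt hJ hg) _ => D; by rewrite mul0r subr0.
  case: G hJ hg => dE E hE iota hi J hJat /= hJ0 _; subst J.
  case: (eqVneq (iota \top%O) \top%O) => ht.
  + exists 1.
    have hr := @rel2 _ L (emptyDiagram hL) (Diagram hE hi hJat) iota
      (let: And3 he _ _ := hi in he) (iso_rk hL hE hi ht) (fun x => erefl) erefl.
    apply: span_ext (spanS (-1) hr (span0 L)) _ => D /=; ring.
  + exists 0.
    have hr : relvec (delta (Diagram hE hi hJat)).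
      apply: rel3; rewrite /Fiota /joinJ /= big_nil joinx0.
      by rewrite lt_neqAle ht lex1.
    apply: span_ext (spanS 1 hr (span0 L)) _ => D; ring.
- move=> G hg hn; case: (pselect (dg_J G = [::])) => hJ; last first.
    by case: hn; exact: part1.
  rewrite /deg hJ /joinJ big_nil meet0x subrr mulr0 subrr.
  done.
Qed.
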